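(* Let $\mathcal{B}$ be a $\sigma$-algebra on a nonempty set $E$. Every $\sigma$-maxitive measure of bounded variation on $\mathcal{B}$ is finite and essential.
   Context: A $\sigma$-maxitive measure on $\mathcal{B}$ is a map $\nu:\mathcal{B}\to[0,\infty]$ with $\nu(\emptyset)=0$, $\nu(B\cup B')=\max(\nu(B),\nu(B'))$ for all $B,B'\in\mathcal{B}$, and $\nu(\bigcup_nB_n)=\lim_n\nu(B_n)$ for every nondecreasing sequence $(B_n)$ in $\mathcal{B}$. It is of bounded variation if $|\nu|:=\sup_\pi\sum_{B\in\pi}\nu(B)<\infty$, the supremum being over all finite partitions $\pi$ of $E$ into elements of $\mathcal{B}$. It is finite if $\nu(B)<\infty$ for all $B\in\mathcal{B}$, and essential if there is a $\sigma$-finite $\sigma$-additive measure $m$ on $\mathcal{B}$ with $\nu(B)>0\iff m(B)>0$ for all $B\in\mathcal{B}$. *)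

(* Defs.v *)
From HB Require Import structures.
From mathcomp Require Import all_boot all_order all_algebra.
From mathcomp Require Import all_classical all_reals all_analysis.
Set Implicit Arguments. Unset Strict Implicit. Unset Printing Implicit Defensive.
Import Order.TTheory GRing.Theory Num.Theory.
Local Open Scope classical_set_scope.
Local Open Scope ring_scope.
Local Open Scope ereal_scope.

Section maxitive.
Context d (T : measurableType d) (R : realType).
Implicit Types nu : set T -> \bar R.

Definition smax_sigma_maxitive nu : Prop :=
  [/\ (forall B, measurable B -> 0 <= nu B),
      nu set0 = 0,
      (forall B B', measurable B -> measurable B' ->
          nu (B `|` B') = maxe (nu B) (nu B')) &
      (forall B : nat -> set T, (forall n, measurable (B n)) ->
          {homo B : n m / (n <= m)%N >-> n `<=` m} ->
          (nu \o B) @ \oo --> nu (\bigcup_n B n))].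

Definition smax_partition (n : nat) (F : nat -> set T) : Prop :=
  [/\ (forall i, (i < n)%N -> measurable (F i)),
      trivIset `I_n F &
      \bigcup_(i in `I_n) F i = [set: T]].

Definition smax_variation nu : \bar R :=
  ereal_sup [set s | exists n F, smax_partition n F /\
                      s = \sum_(i < n) nu (F i)].

Definition smax_bounded_variation nu : Prop := smax_variation nu < +oo.

Definition smax_finite nu : Prop :=
  forall B, measurable B -> nu B < +oo.

Definition smax_essential nu : Prop :=
  exists m : {measure set T -> \bar R}, sigma_finite [set: T] m /\
    forall B, measurable B -> (0 < nu B <-> 0 < m B).
End maxitive.

(* Main.v *)
Require Import Defs.
From HB Require Import structures.
From mathcomp Require Import all_boot all_order all_algebra.
From mathcomp Require Import all_classical all_reals all_analysis.
Set Implicit Arguments. Unset Strict Implicit. Unset Printing Implicit Defensive.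
Import Order.TTheory GRing.Theory Num.Theory.
Local Open Scope classical_set_scope.
Local Open Scope ring_scope.
Local Open Scope ereal_scope.

Section var.
Context d (T : measurableType d) (R : realType) (nu : set T -> \bar R).
Variable hyp : smax_sigma_maxitive nu /\ smax_bounded_variation nu.
Let nu_ge0 : forall B, measurable B -> 0 <= nu B.
Proof. by case: hyp => -[]. Qed.
Let nu0 : nu set0 = 0.
Proof. by case: hyp => -[]. Qed.
Let numax : forall B B', measurable B -> measurable B' ->
          nu (B `|` B') = maxe (nu B) (nu B').
Proof. by case: hyp => -[]. Qed.
Let nucvg : forall B : nat -> set T, (forall n, measurable (B n)) ->
          {homo B : n m / (n <= m)%N >-> n `<=` m} ->
          (nu \o B) @ \oo --> nu (\bigcup_n B n).
Proof. by case: hyp => -[]. Qed.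
Let hV : smax_variation nu < +oo.
Proof. by case: hyp. Qed.

Lemma nu_mono A B : measurable A -> measurable B -> A `<=` B -> nu A <= nu B.
Proof.
move=> mA mB AB; rewrite -(setDUK AB) numax //; last exact: measurableD.
by rewrite le_max lexx.
Qed.

Lemma nuU_le A B : measurable A -> measurable B -> nu (A `|` B) <= nu A + nu B.
Proof.
move=> mA mB; rewrite numax // ge_max; apply/andP; split.
  by apply: leeDl; apply: nu_ge0.
by apply: leeDr; apply: nu_ge0.
Qed.

Lemma nu_bigU (F : nat -> set T) n : (forall i, measurable (F i)) ->
  nu (\big[setU/set0]_(i < n) F i) <= \sum_(i < n) nu (F i).
Proof.
move=> mF; elim: n => [|n IH]; first by rewrite !big_ord0 nu0.
rewrite !big_ord_recr /=; apply: le_trans (nuU_le _ _) _ => //.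
  exact: bigsetU_measurable.
exact: leeD2r.
Qed.

Lemma nu_le_series (H : set T) (F : nat -> set T) : measurable H ->
  (forall n, measurable (F n)) -> H `<=` \bigcup_n F n ->
  nu H <= \sum_(n <oo) nu (H `&` F n).
Proof.
move=> mH mF HF.
pose C N := \big[setU/set0]_(n < N) (H `&` F n).
have mC N : measurable (C N).
  by apply: bigsetU_measurable => i _; apply: measurableI.
have Cnd : {homo C : n m / (n <= m)%N >-> n `<=` m}.
  move=> n m nm; rewrite /C -(bigcup_mkord n (fun i => H `&` F i)).
  rewrite -(bigcup_mkord m (fun i => H `&` F i)) => x [i /= ilt Hx].
  by exists i => //=; apply: leq_trans nm.
have CH : \bigcup_n C n = H.
  apply/seteqP; split.
    by move=> x [N _]; rewrite /C -(bigcup_mkord N (fun i => H `&` F i)) => -[i _ []].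
  move=> x Hx; have [n _ Fx] := HF x Hx; exists n.+1 => //.
  by rewrite /C -(bigcup_mkord n.+1 (fun i => H `&` F i)); exists n => //=.
have := nucvg mC Cnd; rewrite CH => hc.
rewrite -(cvg_lim _ hc)//.
apply: lime_le; first by apply/cvg_ex; exists (nu H).
apply: nearW => N /=; rewrite /C.
apply: le_trans (@nu_bigU (fun i => H `&` F i) N _) _.
  by move=> i; apply: measurableI.
rewrite -(big_mkord xpredT (fun i => nu (H `&` F i))).
apply: nneseries_lim_ge => i _ _; apply: nu_ge0; exact: measurableI.
Qed.

Definition vset (B : set T) := [set s | exists n (F : nat -> set T),
  [/\ forall i, (i < n)%N -> measurable (F i) /\ F i `<=` B,
      trivIset `I_n F & s = \sum_(i < n) nu (F i)]].

Definition vm (h : smax_sigma_maxitive nu /\ smax_bounded_variation nu)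
  (B : set T) : \bar R := ereal_sup (vset B).

Lemma vm_ge0 B : 0 <= vm hyp B.
Proof.
apply: ereal_sup_ubound; exists 0%N, (fun _ => set0); split => //.
- by rewrite big_ord0.
Qed.

Lemma vm0 : vm hyp set0 = 0.
Proof.
apply/le_anti/andP; split; last exact: vm_ge0.
apply: ge_ereal_sup => s [n [F [hF _ ->]]].
rewrite big1 // => i _; have [_] := hF i (ltn_ord i); rewrite subset0 => ->; by rewrite nu0.
Qed.

Lemma vm_setT_le : vm hyp setT <= smax_variation nu.
Proof.
apply: ge_ereal_sup => s [n [F [hF tF ->]]].
pose G i := if (i < n)%N then F i else ~` (\big[setU/set0]_(j < n) F j).
have mU : measurable (\big[setU/set0]_(j < n) F j).
  by apply: bigsetU_measurable => i _; have [] := hF i (ltn_ord i).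
have Ht : [set s | exists n F, smax_partition n F /\
                      s = \sum_(i < n) nu (F i)] (\sum_(i < n.+1) nu (G i)).
  exists n.+1, G; split => //; split.
  - move=> i _; rewrite /G; case: ifP => [ilt|_]; first by have [] := hF i ilt.
    exact: measurableC.
  - move=> i j /= ilt jlt [x [Gi Gj]]; move: Gi Gj; rewrite /G.
    case: ifP => iln; case: ifP => jln.
    + by move=> Fi Fj; apply: tF => //; exists x.
    + move=> Fi nU; exfalso; apply: nU; rewrite -(bigcup_mkord n F).
      by exists i; [rewrite /= iln|].
    + move=> nU Fj; exfalso; apply: nU; rewrite -(bigcup_mkord n F).
      by exists j; [rewrite /= jln|].
    + move=> _ _; move: ilt jlt; rewrite /= !ltnS => ilt jlt.
      apply/eqP; rewrite eqn_leq; apply/andP; split.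
        by apply: leq_trans ilt _; rewrite leqNgt jln.
      by apply: leq_trans jlt _; rewrite leqNgt iln.
  - apply/seteqP; split => // x _.
    have [|nx] := pselect ((\big[setU/set0]_(j < n) F j) x).
      rewrite -(bigcup_mkord n F) => -[j /= jlt Fx].
      by exists j => /=; [apply: ltnW | rewrite /G jlt].
    by exists n => //=; rewrite /G ltnn.
apply: le_trans (ereal_sup_ubound Ht).
rewrite big_ord_recr /=; apply: le_trans (leeDl _ _).
  by apply: lee_sum => i _; rewrite /G ltn_ord.
apply: nu_ge0; rewrite /G ltnn; exact: measurableC.
Qed.

Lemma vm_le B : vm hyp B <= vm hyp setT.
Proof.
apply: ereal_sup_le => s [n [F [hF tF ->]]]; exists n, F; split => //.
by move=> i ilt; have [] := hF i ilt.
Qed.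

Lemma vm_lty B : vm hyp B < +oo.
Proof. exact: le_lt_trans (vm_le B) (le_lt_trans vm_setT_le hV). Qed.

Lemma vset_fin B s : vset B s -> s \is a fin_num.
Proof.
move=> hs; rewrite ge0_fin_numE.
  exact: le_lt_trans (ereal_sup_ubound hs) (vm_lty B).
case: hs => n [F [hF _ ->]]; apply: sume_ge0 => i _.
by have [] := hF i (ltn_ord i); move/nu_ge0.
Qed.

Lemma vm_add2 : additive2 (vm hyp).
Proof.
move=> A B mA mB AB0; apply/le_anti/andP; split.
  apply: ge_ereal_sup => s [n [F [hF tF ->]]].
  apply: (@le_trans _ _ (\sum_(i < n) (nu (F i `&` A) + nu (F i `&` B)))).
    apply: lee_sum => i _; have [mFi FiAB] := hF i (ltn_ord i).
    rewrite -{1}(setIidl FiAB) setIUr; apply: nuU_le; exact: measurableI.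
  rewrite big_split /=; apply: leeD; apply: ereal_sup_ubound.
    exists n, (fun i => F i `&` A); split => //.
      by move=> i ilt; have [mFi _] := hF i ilt; split;
        [exact: measurableI | exact: subIsetr].
    by move=> i j Ii Ij [x [[Fi _] [Fj _]]]; apply: tF => //; exists x.
  exists n, (fun i => F i `&` B); split => //.
    by move=> i ilt; have [mFi _] := hF i ilt; split;
      [exact: measurableI | exact: subIsetr].
  by move=> i j Ii Ij [x [[Fi _] [Fj _]]]; apply: tF => //; exists x.
have finB : vm hyp B \is a fin_num by rewrite ge0_fin_numE ?vm_ge0 ?vm_lty.
rewrite -leeBrDr //; apply: ge_ereal_sup => s1 hs1.
have fin1 := vset_fin hs1.
rewrite leeBrDr // addeC -leeBrDr //; apply: ge_ereal_sup => s2 hs2.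
rewrite leeBrDr //.
case: hs1 => n [F [hF tF ->]]; case: hs2 => k [G [hG tG ->]].
pose H i := if (i < k)%N then G i else F (i - k)%N.
apply: ereal_sup_ubound; exists (k + n)%N, H; split.
- move=> i ilt; rewrite /H; case: ifP => ik.
    by have [mG GB] := hG i ik; split => //; apply: subset_trans GB _.
  have ink : (i - k < n)%N by rewrite ltn_subLR // leqNgt ik.
  by have [mF FA] := hF _ ink; split => //; apply: subset_trans FA _.
- move=> i j /= ilt jlt [x []]; rewrite /H; case: ifP => ik; case: ifP => jk.
  + by move=> Gi Gj; apply: tG => //; exists x.
  + move=> Gi Fj; exfalso; have : (A `&` B) x.
      split; last by have [_ ] := hG i ik; apply.
      have ink : (j - k < n)%N by rewrite ltn_subLR // leqNgt jk.
      by have [_ ] := hF _ ink; apply.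
    by rewrite AB0.
  + move=> Fi Gj; exfalso; have : (A `&` B) x.
      split; last by have [_ ] := hG j jk; apply.
      have ink : (i - k < n)%N by rewrite ltn_subLR // leqNgt ik.
      by have [_ ] := hF _ ink; apply.
    by rewrite AB0.
  + move=> Fi Fj.
    have ink : (i - k < n)%N by rewrite ltn_subLR // leqNgt ik.
    have jnk : (j - k < n)%N by rewrite ltn_subLR // leqNgt jk.
    have e : (i - k = j - k)%N by apply: tF => //; exists x.
    have ki : (k <= i)%N by rewrite leqNgt ik.
    have kj : (k <= j)%N by rewrite leqNgt jk.
    by rewrite -(subnK ki) -(subnK kj) e.
- rewrite big_split_ord /=; congr (_ + _).
    by apply: eq_bigr => i _; rewrite /H /= ltn_ord.
  apply: eq_bigr => i _; rewrite /H /= ltnNge leq_addr /=.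
  by rewrite addKn.
Qed.

Lemma vm_semi_additive : measure_function.semi_additive (vm hyp).
Proof. by rewrite (additive2P vm0); exact: vm_add2. Qed.

HB.instance Definition _ := isContent.Build d T R (vm hyp)
  vm_ge0 vm_semi_additive.

Lemma vm_sigma_sub : measurable_subset_sigma_subadditive (vm hyp).
Proof.
move=> A F mF mA AF; apply: ge_ereal_sup => s [k [H [hH tH ->]]].
apply: (@le_trans _ _ (\sum_(i < k) \sum_(n <oo) nu (H i `&` F n))).
  apply: lee_sum => i _; have [mHi HiA] := hH i (ltn_ord i).
  by apply: nu_le_series => //; apply: subset_trans HiA AF.
rewrite -nneseries_sum; last first.
  by move=> i j _; apply: nu_ge0; apply: measurableI => //; have [] := hH i (ltn_ord i).
apply: lee_nneseries => [n _ _|n _].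
  apply: sume_ge0 => i _; apply: nu_ge0; apply: measurableI => //.
  by have [] := hH i (ltn_ord i).
apply: ereal_sup_ubound; exists k, (fun i => H i `&` F n); split => //.
  by move=> i ilt; have [mHi _] := hH i ilt; split;
    [exact: measurableI | exact: subIsetr].
by move=> i j Ii Ij [x [[Hi _] [Hj _]]]; apply: tH => //; exists x.
Qed.

HB.instance Definition _ := Content_SigmaSubAdditive_isMeasure.Build _ _ _
  (vm hyp) vm_sigma_sub.

Lemma nu_le_vm B : measurable B -> nu B <= vm hyp B.
Proof.
move=> mB; apply: ereal_sup_ubound; exists 1%N, (fun _ => B); split => //.
- by move=> i /= _; [split].
- by move=> i j /=; rewrite !ltnS !leqn0 => /eqP -> /eqP ->.
- by rewrite big_ord1.
Qed.

Lemma vm_pos B : measurable B -> (0 < nu B <-> 0 < vm hyp B).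
Proof.
move=> mB; split => [h|]; first exact: lt_le_trans (nu_le_vm mB).
apply: contraPP => /negP; rewrite -leNgt => h; apply/negP; rewrite -leNgt.
apply: ge_ereal_sup => s [n [F [hF _ ->]]].
apply: sume_le0 => i _; have [mFi FiB] := hF i (ltn_ord i).
exact: le_trans (nu_mono mFi mB FiB) h.
Qed.

End var.

Theorem proposition3p5 (d : measure_display) (T : measurableType d)
  (R : realType) (nu : set T -> \bar R) :
  [set: T] !=set0 ->
  smax_sigma_maxitive nu -> smax_bounded_variation nu ->
  smax_finite nu /\ smax_essential nu.
Proof.
move=> _ hs hb.
have h : smax_sigma_maxitive nu /\ smax_bounded_variation nu := conj hs hb.
split.
  move=> B mB; exact: le_lt_trans (nu_le_vm h mB) (vm_lty h B).
exists (vm h); split.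
  exists (fun _ => setT).
    by apply/seteqP; split => // x _; exists 0%N.
  by move=> _; split; [exact: measurableT | exact: vm_lty].
by move=> B mB; exact: vm_pos.
Qed.
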